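(* Let $\mathbb{K}$ be a field, $m\in\mathbb{Z}_{>0}$, $n=m$, and let $\mathbf{U}_1=\mathbf{U}_1(\mathfrak{gl}_m)$. Let $V$ be the $n$-dimensional vector representation of $\mathbf{U}_1$, $V^*$ its dual, and for $r,s\in\mathbb{Z}_{\geq 0}$ set $T_n^{r,s}=V^{\otimes r}\otimes (V^* )^{\otimes s}$. If $T_n^{r,s}$ is a non-semisimple $\mathbf{U}_1$-module, then $T_n^{r+1,s+1}$ is a non-semisimple $\mathbf{U}_1$-module.
   Context: $\mathbf{U}_1(\mathfrak{gl}_m)$ is the (Lusztig) quantized enveloping algebra of $\mathfrak{gl}_m$ specialized at $q=1$ over $\mathbb{K}$ (for any characteristic of $\mathbb{K}$); modules are finite-dimensional of type $1$, and tensor products carry the usual Hopf algebra action. *)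

(* Defs.v *)
From HB Require Import structures.
From mathcomp Require Import all_boot all_order all_algebra.
Set Implicit Arguments. Unset Strict Implicit. Unset Printing Implicit Defensive.
Import Order.TTheory GRing.Theory Num.Theory.
Local Open Scope ring_scope.

(* The mixed tensor space T_n^{r,s} = V^{(x)r} (x) (V^* )^{(x)s}, n = m,
   with basis v_{b 0} (x) ... (x) v_{b (r-1)} (x) v^*_{b r} (x) ... (x) v^*_{b (r+s-1)}
   indexed by functions b : 'I_(r+s) -> 'I_m. Factors p < r are copies of V,
   factors p >= r are copies of V^*. *)
Definition tix (m r s : nat) := {ffun 'I_(r + s) -> 'I_m}.
Definition dimT (m r s : nat) : nat := #|{: tix m r s}|.

(* Action of the generator E_{ij} (i <> j) of U_1(gl_m) on one tensor factor,
   in row-vector convention: coefficient of basis vector c in E_{ij} . a.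
   On V^*: E_{ij} acts through the antipode, S(E_{ij}) = -E_{ij} (q = 1),
   so E_{ij} v^*_a = - [a = i] v^*_j.
   On V and V^* the divided powers E_{ij}^{(a)}, a >= 2, act by 0. *)
Definition efac (K : fieldType) (m r s : nat) (p : 'I_(r + s)) (i j a c : 'I_m) : K :=
  if (p < r)%N then ((a == j) && (c == i))%:R
  else - ((a == i) && (c == j))%:R.

(* Action of the divided power E_{ij}^{(k)} on T^{r,s} via the iterated coproduct
   Delta(E^{(k)}) = sum_{a_1+...+a_N = k} E^{(a_1)} (x) ... (x) E^{(a_N)}. *)
Definition Ediv_coef (K : fieldType) (m r s : nat) (i j : 'I_m) (k : nat)
    (b c : tix m r s) : K :=
  \sum_(S : {set 'I_(r + s)} | #|S| == k)
     \prod_(p : 'I_(r + s))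
        (if p \in S then efac K p i j (b p) (c p) else (b p == c p)%:R).

Definition Ediv (K : fieldType) (m r s : nat) (i j : 'I_m) (k : nat)
    : 'M[K]_(dimT m r s) :=
  \matrix_(x, y) Ediv_coef K i j k (enum_val x) (enum_val y).

Definition wt (m r s : nat) (b : tix m r s) (i : 'I_m) : int :=
  (#|[set p : 'I_(r + s) | (p < r)%N && (b p == i)]|)%:Z
  - (#|[set p : 'I_(r + s) | (r <= p)%N && (b p == i)]|)%:Z.

Definition ibinom (z : int) (t : nat) : int :=
  match z with
  | Posz n => ('C(n, t))%:Z
  | Negz n => (-1) ^+ t * ('C(n + t, t))%:Z   (* Negz n = -(n+1) *)
  end.

(* Action of the Cartan generator  (H_i choose t)  (i.e. [K_i;0 choose t] at q=1),
   diagonal on weight vectors. (K_i acts trivially on type-1 modules at q = 1.) *)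
Definition Hbin (K : fieldType) (m r s : nat) (i : 'I_m) (t : nat)
    : 'M[K]_(dimT m r s) :=
  \matrix_(x, y) (if x == y then (ibinom (wt (enum_val x) i) t)%:~R else 0).

(* U is (the row space of) a U_1(gl_m)-submodule of T^{r,s}: stable under all
   generators E_{ij}^{(k)} (i <> j, which includes the E_alpha^{(k)}, F_alpha^{(k)})
   and (H_i choose t). *)
Definition is_submod (K : fieldType) (m r s : nat) (U : 'M[K]_(dimT m r s)) : Prop :=
  (forall (i j : 'I_m) (k : nat), i != j -> (U *m Ediv K r s i j k <= U)%MS)
  /\ (forall (i : 'I_m) (t : nat), (U *m Hbin K r s i t <= U)%MS).

Definition Tsemisimple (K : fieldType) (m r s : nat) : Prop :=
  forall U : 'M[K]_(dimT m r s), is_submod U ->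
    exists W : 'M[K]_(dimT m r s),
      is_submod W /\ mxdirect (U + W) /\ (U + W == 1%:M)%MS.

(* Main.v *)
Require Import Defs.
From mathcomp Require Import all_boot all_order all_algebra.
From mathcomp Require Import zify ring.
Set Implicit Arguments. Unset Strict Implicit. Unset Printing Implicit Defensive.
Import Order.TTheory GRing.Theory Num.Theory.
Local Open Scope ring_scope.
Lemma quot_ss (K : fieldType) (m r s r' s' : nat)
  (Psi : 'M[K]_(dimT m r' s', dimT m r s)) :
  (forall (i j : 'I_m) k, i != j -> Ediv K r' s' i j k *m Psi = Psi *m Ediv K r s i j k) ->
  (forall (i : 'I_m) t, Hbin K r' s' i t *m Psi = Psi *m Hbin K r s i t) ->
  (1%:M <= Psi)%MS ->
  Tsemisimple K m r' s' -> Tsemisimple K m r s.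
Proof.
move=> hE hH hfull ssB U [UE UH].
pose U' := kermx (Psi *m cokermx U).
have memU' : forall p (X : 'M_(p, dimT m r' s')), (X <= U')%MS = (X *m Psi <= U)%MS.
  by move=> p X; rewrite sub_kermx submxE mulmxA.
have U'Psi : (U' *m Psi <= U)%MS by rewrite -memU'.
have subU' : is_submod U'.
  split.
    move=> i j k ij; rewrite memU' -mulmxA hE // mulmxA.
    exact: submx_trans (submxMr _ U'Psi) (UE _ _ _ ij).
  move=> i t; rewrite memU' -mulmxA hH // mulmxA.
  exact: submx_trans (submxMr _ U'Psi) (UH _ _).
have [W [[WE WH] [dir full]]] := ssB U' subU'.
exists (<<W *m Psi>>)%MS; split; [split|split].
- move=> i j k ij; rewrite (eqmxMr _ (genmxE _)) genmxE.
  by rewrite -mulmxA -hE // mulmxA submxMr // WE.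
- move=> i t; rewrite (eqmxMr _ (genmxE _)) genmxE.
  by rewrite -mulmxA -hH // mulmxA submxMr // WH.
- apply/mxdirect_addsP; apply/eqP; rewrite -submx0.
  have /submxP[D HD] : ((U :&: <<W *m Psi>>) <= W *m Psi)%MS.
    by rewrite -(genmxE (W *m Psi)) capmxSr.
  have h1 : (D *m W <= U')%MS by rewrite memU' -mulmxA -HD capmxSl.
  have h2 : (D *m W <= W)%MS by apply: submxMl.
  have : (D *m W <= U' :&: W)%MS by rewrite sub_capmx h1 h2.
  move/mxdirect_addsP: dir => ->; move/submx0null => DW0.
  by rewrite HD mulmxA DW0 mul0mx submx_refl.
- rewrite submx1 /=.
  rewrite (adds_eqmx (eqmx_refl U) (genmxE _)).
  move/submxP: hfull => [D HD].
  rewrite HD.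
  have hD : (D <= U' + W)%MS by rewrite (eqmxP full) submx1.
  apply: submx_trans (submxMr Psi hD) _.
  rewrite addsmxMr addsmxS //.
Qed.

Section Comb.
Variables (K : fieldType) (m r s : nat).

Lemma pr_lt : (r < r.+1 + s.+1)%N. Proof. lia. Qed.
Lemma pl_lt : ((r + s).+1 < r.+1 + s.+1)%N. Proof. lia. Qed.
Definition pr : 'I_(r.+1 + s.+1) := Ordinal pr_lt.
Definition pl : 'I_(r.+1 + s.+1) := Ordinal pl_lt.
Definition ev (p : 'I_(r + s)) : nat := if (p < r)%N then nat_of_ord p else (nat_of_ord p).+1.
Lemma e_lt (p : 'I_(r + s)) : (ev p < r.+1 + s.+1)%N.
Proof. have := ltn_ord p; rewrite /ev; case: ifP => _; lia. Qed.
Definition e (p : 'I_(r + s)) : 'I_(r.+1 + s.+1) := Ordinal (e_lt p).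

Lemma e_inj : injective e.
Proof.
move=> p q /(congr1 val) /=; rewrite /ev => h; apply: val_inj => /=.
move: h; case: ifP; case: ifP; lia.
Qed.
Lemma e_neq_pr p : e p != pr.
Proof. apply/eqP => /(congr1 val) /=; rewrite /ev; case: ifP; lia. Qed.
Lemma e_neq_pl p : e p != pl.
Proof. apply/eqP => /(congr1 val) /=; have := ltn_ord p; rewrite /ev; case: ifP; lia. Qed.
Lemma pr_neq_pl : pr != pl.
Proof. apply/eqP => /(congr1 val) /=; lia. Qed.
Lemma e_cases q : q != pr -> q != pl -> exists p, e p = q.
Proof.
move=> /eqP h1 /eqP h2.
have h1' : nat_of_ord q <> r by move=> h; apply: h1; apply: val_inj.
have h2' : nat_of_ord q <> (r + s).+1 by move=> h; apply: h2; apply: val_inj.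
have hq := ltn_ord q.
case: (ltnP q r) => hqr.
  have hp : (nat_of_ord q < r + s)%N by lia.
  exists (Ordinal hp); apply: val_inj; rewrite /= /ev /= hqr //.
have hp : ((nat_of_ord q).-1 < r + s)%N by lia.
exists (Ordinal hp); apply: val_inj; rewrite /= /ev /=.
have -> : ((nat_of_ord q).-1 < r)%N = false by lia.
lia.
Qed.
Lemma e_kind p : (e p < r.+1)%N = (p < r)%N.
Proof. rewrite /= /ev; case: ifP; lia. Qed.
Lemma pr_kind : (pr < r.+1)%N. Proof. by []. Qed.
Lemma pl_kind : (pl < r.+1)%N = false. Proof. rewrite /=; lia. Qed.

Lemma efac_e (p : 'I_(r + s)) (i j a c : 'I_m) :
  efac K (e p) i j a c = efac K p i j a c.
Proof. by rewrite /efac e_kind. Qed.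

Lemma big_split3 (R : Type) (idx : R) (op : Monoid.com_law idx)
  (F : 'I_(r.+1 + s.+1) -> R) :
  \big[op/idx]_q F q = op (F pr) (op (F pl) (\big[op/idx]_p F (e p))).
Proof.
rewrite (bigD1 pr) //= (bigD1 pl) /=; last by rewrite eq_sym pr_neq_pl.
congr (op _ (op _ _)).
rewrite -(big_imset _ (in2W e_inj)) /=.
apply: eq_bigl => q; apply/andP/imsetP.
  by move=> [h1 h2]; have [p <-] := e_cases h1 h2; exists p.
by move=> [p _ ->]; rewrite e_neq_pr e_neq_pl.
Qed.


Definition restr (c : tix m r.+1 s.+1) : tix m r s := [ffun p => c (e p)].
Definition glue (c' : tix m r s) (t : 'I_m) : tix m r.+1 s.+1 :=
  [ffun q => if [pick p | e p == q] is Some p then c' p else t].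
Lemma glue_e c' t p : glue c' t (e p) = c' p.
Proof.
rewrite ffunE; case: pickP => [p' /eqP/e_inj -> //|/(_ p)]; by rewrite eqxx.
Qed.
Lemma glue_pr c' t : glue c' t pr = t.
Proof.
rewrite ffunE; case: pickP => [p' /eqP H|//]; by move: (e_neq_pr p'); rewrite H eqxx.
Qed.
Lemma glue_pl c' t : glue c' t pl = t.
Proof.
rewrite ffunE; case: pickP => [p' /eqP H|//]; by move: (e_neq_pl p'); rewrite H eqxx.
Qed.
Lemma restr_glue c' t : restr (glue c' t) = c'.
Proof. by apply/ffunP => p; rewrite ffunE glue_e. Qed.

Definition psic (c : tix m r.+1 s.+1) (c' : tix m r s) : K :=
  ((c pr == c pl) && (restr c == c'))%:R.

Lemma sum_psi (G : tix m r.+1 s.+1 -> K) c' :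
  \sum_c G c * psic c c' = \sum_t G (glue c' t).
Proof.
rewrite (partition_big (fun c : tix m r.+1 s.+1 => c pr) (fun _ => true)) //=.
apply: eq_bigr => t _.
rewrite (bigD1 (glue c' t)) /=; last by rewrite glue_pr.
rewrite big1 ?addr0.
  by rewrite /psic glue_pr glue_pl eqxx restr_glue eqxx mulr1.
move=> c /andP[/eqP cpr cne]; rewrite /psic.
case: (boolP ((c pr == c pl) && (restr c == c'))) => [/andP[/eqP h1 /eqP h2]|]; last by rewrite mulr0.
exfalso; move/negP: cne; apply; apply/eqP/ffunP => q.
case: (eqVneq q pr) => [->|qpr]; first by rewrite glue_pr.
case: (eqVneq q pl) => [->|qpl]; first by rewrite glue_pl -h1.
have [p <-] := e_cases qpr qpl; by rewrite glue_e -h2 ffunE.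
Qed.

Definition hS (x : {set 'I_(r + s)} * bool * bool) : {set 'I_(r.+1 + s.+1)} :=
  e @: x.1.1 :|: (if x.1.2 then [set pr] else set0) :|: (if x.2 then [set pl] else set0).
Lemma mem_hS_e x p : (e p \in hS x) = (p \in x.1.1).
Proof.
rewrite /hS !inE (mem_imset _ _ e_inj).
by case: x.1.2; case: x.2; rewrite ?inE ?(negPf (e_neq_pr p)) ?(negPf (e_neq_pl p)) ?orbF.
Qed.
Lemma notin_e_pr (A : {set 'I_(r + s)}) : (pr \in e @: A) = false.
Proof. by apply/imsetP => -[p _ H]; move: (e_neq_pr p); rewrite H eqxx. Qed.
Lemma notin_e_pl (A : {set 'I_(r + s)}) : (pl \in e @: A) = false.
Proof. by apply/imsetP => -[p _ H]; move: (e_neq_pl p); rewrite H eqxx. Qed.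
Lemma mem_hS_pr x : (pr \in hS x) = x.1.2.
Proof.
rewrite /hS !inE notin_e_pr.
by case: x.1.2; case: x.2; rewrite ?inE ?eqxx ?(negPf pr_neq_pl) ?orbF ?orbT.
Qed.
Lemma mem_hS_pl x : (pl \in hS x) = x.2.
Proof.
rewrite /hS !inE notin_e_pl ?(eq_sym pl pr).
by case: x.1.2; case: x.2; rewrite ?inE ?eqxx ?(eq_sym pl pr) ?(negPf pr_neq_pl) ?orbF ?orbT.
Qed.
Definition hinv (S : {set 'I_(r.+1 + s.+1)}) := (e @^-1: S, pr \in S, pl \in S).
Lemma hS_K : cancel hS hinv.
Proof.
case=> [[S0 a1] a2]; rewrite /hinv mem_hS_pr mem_hS_pl; congr (_, _, _).
by apply/setP => p; rewrite inE mem_hS_e.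
Qed.
Lemma hinv_K : cancel hinv hS.
Proof.
move=> S; apply/setP => q.
case: (eqVneq q pr) => [->|qpr]; first by rewrite mem_hS_pr.
case: (eqVneq q pl) => [->|qpl]; first by rewrite mem_hS_pl.
have [p <-] := e_cases qpr qpl; by rewrite mem_hS_e inE.
Qed.
Lemma card_hS x : #|hS x| = (#|x.1.1| + x.1.2 + x.2)%N.
Proof.
rewrite -!sum1_card big_mkcond /= big_split3 mem_hS_pr mem_hS_pl.
under eq_bigr do rewrite mem_hS_e.
rewrite -big_mkcond /=.
set n := (\sum_(i in x.1.1) 1)%N; move: n => n.
case: x.1.2; case: x.2 => /=; lia.
Qed.

Lemma pre_hS x : e @^-1: hS x = x.1.1.
Proof. exact: (congr1 (fun y => y.1.1) (hS_K x)). Qed.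

Lemma sum_pick (f : 'I_m -> K) (a : 'I_m) :
  (forall t, t != a -> f t = 0) -> \sum_t f t = f a.
Proof. by move=> H; rewrite (bigD1 a) //= big1 ?addr0. Qed.

Lemma sum_triple (F : {set 'I_(r + s)} -> bool -> bool -> K) :
  \sum_(x : {set 'I_(r + s)} * bool * bool) F x.1.1 x.1.2 x.2 =
  \sum_S0 (F S0 true true + F S0 true false + (F S0 false true + F S0 false false)).
Proof.
transitivity (\sum_(y : {set 'I_(r + s)} * bool) \sum_(a2 : bool) F y.1 y.2 a2).
  by rewrite pair_big; apply: eq_big => // -[[? ?] ?].
transitivity (\sum_(S0 : {set 'I_(r + s)}) \sum_(a1 : bool) \sum_(a2 : bool) F S0 a1 a2).
  by rewrite [RHS]pair_big; apply: eq_big => // -[? ?].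
by apply: eq_bigr => S0 _; rewrite !big_bool.
Qed.

Lemma coef_main (i j : 'I_m) k (ij : i != j) (b : tix m r.+1 s.+1) (c' : tix m r s) :
  \sum_c Ediv_coef K i j k b c * psic c c' =
  (b pr == b pl)%:R * Ediv_coef K i j k (restr b) c'.
Proof.
rewrite sum_psi.
pose P0 (S0 : {set 'I_(r + s)}) := \prod_p (if p \in S0 then efac K p i j (restr b p) (c' p)
   else (restr b p == c' p)%:R).
pose g (a : bool) (t : 'I_m) : K := if a then efac K pr i j (b pr) t else (b pr == t)%:R.
pose h (a : bool) (t : 'I_m) : K := if a then efac K pl i j (b pl) t else (b pl == t)%:R.
pose T a1 a2 := \sum_t g a1 t * h a2 t.
have step : forall (S : {set 'I_(r.+1 + s.+1)}) t, \prod_q (if q \in S then efac K q i j (b q) (glue c' t q)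
      else (b q == glue c' t q)%:R) = g (pr \in S) t * (h (pl \in S) t * P0 (e @^-1: S)).
  move=> S t; rewrite big_split3 glue_pr glue_pl; congr (_ * (_ * _)).
  by apply: eq_bigr => p _; rewrite glue_e efac_e inE ffunE.
rewrite /Ediv_coef exchange_big /=.
under eq_bigr => S _ do under eq_bigr => t _ do rewrite step.
have inner : forall (S : {set 'I_(r.+1 + s.+1)}), \sum_t g (pr \in S) t * (h (pl \in S) t * P0 (e @^-1: S))
    = T (pr \in S) (pl \in S) * P0 (e @^-1: S).
  by move=> S; rewrite mulr_suml; apply: eq_bigr => t _; rewrite mulrA.
under eq_bigr do rewrite inner.
rewrite (reindex hS) /=; last by apply: onW_bij; exists hinv; [exact: hS_K | exact: hinv_K].
under eq_bigl do rewrite card_hS.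
under eq_bigr do rewrite mem_hS_pr mem_hS_pl pre_hS.
rewrite big_mkcond /=.
rewrite (sum_triple (fun S0 a1 a2 => if (#|S0| + a1 + a2 == k)%N then T a1 a2 * P0 S0 else 0)).
have Ttt : T true true = 0.
  apply: big1 => t _; rewrite /g /h /efac /= pl_kind ltnSn.
  case: (eqVneq t i) => [->|ti]; last by rewrite andbF mul0r.
  by rewrite (negPf ij) andbF oppr0 mulr0.
have Ttf : T true false = ((b pr == j) && (b pl == i))%:R.
  rewrite /T (sum_pick (a := i)) => [|t ti]; rewrite /g /h /efac /= ltnSn.
    by rewrite eqxx andbT; case: (b pr == j); case: (b pl == i); rewrite /= ?mul0r ?mul1r.
  by rewrite (negPf ti) andbF mul0r.
have Tft : T false true = - ((b pr == j) && (b pl == i))%:R.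
  rewrite /T (sum_pick (a := j)) => [|t tj]; rewrite /g /h /efac /= pl_kind.
    by rewrite eqxx andbT; case: (b pr == j); case: (b pl == i); rewrite /= ?mulr0n ?mulr1n ?oppr0 ?mul0r ?mulr0 ?mul1r.
  by rewrite (negPf tj) andbF oppr0 mulr0.
have Tff : T false false = (b pr == b pl)%:R.
  rewrite /T (sum_pick (a := b pr)) => [|t tb]; rewrite /g /h /=.
    by rewrite eqxx mul1r eq_sym.
  by rewrite [b pr == t]eq_sym (negPf tb) mul0r.
rewrite Ttt Ttf Tft Tff [X in _ = _ * X]big_mkcond mulr_sumr /=.
apply: eq_bigr => S0 _; rewrite !addn0 /P0; set X := \prod_(p < r + s) _; set c1 := ((b pr == j) && _)%:R; set c2 := (b pr == b pl)%:R.
case: (#|S0| + 1 + 1 == k)%N; case: (#|S0| + 1 == k)%N; case: (#|S0| == k)%N; ring.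
Qed.

Definition Psi : 'M[K]_(dimT m r.+1 s.+1, dimT m r s) :=
  \matrix_(x, y) psic (enum_val x) (enum_val y).

Lemma sum_psi_r (b : tix m r.+1 s.+1) (F : tix m r s -> K) :
  \sum_c' psic b c' * F c' = (b pr == b pl)%:R * F (restr b).
Proof.
rewrite (bigD1 (restr b)) //= big1 ?addr0; first by rewrite /psic eqxx andbT.
by move=> c' ne; rewrite /psic [restr b == _]eq_sym (negPf ne) andbF mul0r.
Qed.

Lemma sum_enum (n1 n2 : nat) (F : tix m n1 n2 -> K) :
  \sum_(z < dimT m n1 n2) F (enum_val z) = \sum_c F c.
Proof. by rewrite -(big_enum_val (A := {: tix m n1 n2})); apply: eq_bigl. Qed.

Lemma Psi_E (i j : 'I_m) k : i != j ->
  Ediv K r.+1 s.+1 i j k *m Psi = Psi *m Ediv K r s i j k.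
Proof.
move=> ij; apply/matrixP => x y; rewrite !mxE.
under eq_bigr do rewrite !mxE.
under [RHS]eq_bigr do rewrite !mxE.
rewrite (sum_enum (fun c => Ediv_coef K i j k (enum_val x) c * psic c (enum_val y))).
rewrite (sum_enum (fun c => psic (enum_val x) c * Ediv_coef K i j k c (enum_val y))).
by rewrite coef_main // sum_psi_r.
Qed.

Lemma card_split (P : pred 'I_(r.+1 + s.+1)) :
  #|[set q | P q]| = (P pr + (P pl + \sum_p P (e p)))%N.
Proof.
rewrite -sum1_card big_mkcond /= big_split3 !inE.
congr (_ + (_ + _))%N.
by apply: eq_bigr => p _; rewrite inE; case: (P (e p)).
Qed.
Lemma card_sum (Q : pred 'I_(r + s)) : #|[set p | Q p]| = (\sum_p Q p)%N.
Proof.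
rewrite -sum1_card big_mkcond /=.
by apply: eq_bigr => p _; rewrite inE; case: (Q p).
Qed.

Lemma wt_restr (b : tix m r.+1 s.+1) (i : 'I_m) : b pr = b pl -> wt (restr b) i = wt b i.
Proof.
move=> hb; rewrite /wt !card_split !card_sum; cbv beta.
have h3 : (r.+1 <= pr)%N = false by rewrite /=; lia.
have h4 : (r.+1 <= pl)%N = true by rewrite /=; lia.
have E1 : (\sum_p ((e p < r.+1)%N && (b (e p) == i)) = \sum_(p < r + s) ((p < r)%N && (restr b p == i)))%N.
  by apply: eq_bigr => p _; rewrite e_kind ffunE.
have E2 : (\sum_p ((r.+1 <= e p)%N && (b (e p) == i)) = \sum_(p < r + s) ((r <= p)%N && (restr b p == i)))%N.
  by apply: eq_bigr => p _; rewrite leqNgt e_kind -leqNgt ffunE.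
rewrite pr_kind pl_kind h3 h4 E1 E2 hb /= add0n !PoszD; ring.
Qed.

Lemma Psi_H (i : 'I_m) t : Hbin K r.+1 s.+1 i t *m Psi = Psi *m Hbin K r s i t.
Proof.
apply/matrixP => x y; rewrite !mxE.
rewrite (bigD1 x) //= big1 ?addr0; last first.
  by move=> z /negPf zx; rewrite !mxE eq_sym zx mul0r.
rewrite [RHS](bigD1 y) //= [X in _ = _ + X]big1 ?addr0; last first.
  by move=> z /negPf zy; rewrite !mxE zy mulr0.
rewrite !mxE !eqxx /psic.
case: (boolP ((enum_val x pr == enum_val x pl) && (restr (enum_val x) == enum_val y))).
  by move=> /andP[/eqP h1 /eqP <-]; rewrite wt_restr // mulr1 mul1r.
by move=> _; rewrite mulr0 mul0r.
Qed.

Lemma Psi_full : (0 < m)%N -> (1%:M <= Psi)%MS.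
Proof.
move=> hm; pose t0 : 'I_m := Ordinal hm.
apply/submxP.
exists (\matrix_(x, y) (enum_val y == glue (enum_val x) t0)%:R).
apply/matrixP => x y; rewrite !mxE.
under eq_bigr do rewrite !mxE.
rewrite (sum_enum (fun c => (c == glue (enum_val x) t0)%:R * psic c (enum_val y))).
rewrite (bigD1 (glue (enum_val x) t0)) //= big1 ?addr0; last first.
  by move=> c /negPf ->; rewrite mul0r.
rewrite eqxx mul1r /psic glue_pr glue_pl eqxx restr_glue /=.
by rewrite (inj_eq enum_val_inj).
Qed.

End Comb.

Theorem proposition6p2 (K : fieldType) (m r s : nat) :
  (0 < m)%N ->
  ~ Tsemisimple K m r s ->
  ~ Tsemisimple K m r.+1 s.+1.
Proof.
move=> hm nss ss; apply: nss.
exact: (quot_ss (Psi := Psi K m r s) (@Psi_E K m r s) (@Psi_H K m r s) (Psi_full K r s hm) ss).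
Qed.
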